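(* For every integer $n>2$ there exists a unique $\zeta>1$ such that the system $$P_n'(1-\varepsilon_{j+1})-P_n'(1-\varepsilon_j)=\varepsilon_{j+1}P_n'(1-\varepsilon_{j+1})+P_n(1-\varepsilon_{j+1})-\frac{j}{\zeta},\qquad j=1,\dots,n-1,$$ has a solution $(\varepsilon_j)_{j=1}^n$ with $0=\varepsilon_n<\varepsilon_{n-1}<\dots<\varepsilon_2<\varepsilon_1=1$.
   Context: $P_n(t)=\sum_{i=1}^nt^i$ and $P_n'(t)=\sum_{i=1}^n i\,t^{i-1}$. *)

(* Defs.v *)
From HB Require Import structures.
From mathcomp Require Import all_boot all_order all_algebra.
From mathcomp Require Import reals.
Set Implicit Arguments. Unset Strict Implicit. Unset Printing Implicit Defensive.
Import Order.TTheory GRing.Theory Num.Theory.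
Local Open Scope ring_scope.

Definition Pn {R : realType} (n : nat) (t : R) : R :=
  \sum_(1 <= i < n.+1) t ^+ i.

Definition dPn {R : realType} (n : nat) (t : R) : R :=
  \sum_(1 <= i < n.+1) i%:R * t ^+ i.-1.

(* Main.v *)
Require Import Defs.
From HB Require Import structures.
From mathcomp Require Import all_boot all_order all_algebra.
From mathcomp Require Import reals.
From mathcomp Require Import classical_sets boolp topology normedtype.
From mathcomp Require Import ring lra.
Import Order.TTheory GRing.Theory Num.Theory.
Import numFieldNormedType.Exports.
Local Open Scope ring_scope.

Definition ctn {R : realType} (f : R -> R) := forall x e : R, 0 < e ->
  exists2 d : R, 0 < d & forall y : R, `|y - x| < d -> `|f y - f x| < e.

Definition lip {R : realType} (f : R -> R) := exists2 L, 0 <= L &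
  forall x y, 0 <= x <= 1 -> 0 <= y <= 1 -> `|f y - f x| <= L * `|y - x|.

Lemma ctn_cont {R : realType} (f : R -> R) : ctn f -> continuous f.
Proof.
move=> cf x; apply/cvgrPdist_lt => e e0; apply/nbhs_normP.
have [d d0 H] := cf x e e0; exists d => //= y hy.
by rewrite distrC H // distrC.
Qed.

Lemma my_ivt {R : realType} (f : R -> R) a b c : ctn f -> a <= b -> f a <= c <= f b ->
  exists2 x, a <= x <= b & f x = c.
Proof.
move=> cf ab /andP[h1 h2].
have [|x xi fx] := @IVT R f a b c ab (continuous_subspaceT (@ctn_cont R f cf)).
  by rewrite ge_min h1 le_max h2 orbT.
by exists x => //; move: xi; rewrite in_itv.
Qed.

Lemma lip_ext {R : realType} (f g : R -> R) : (forall x, f x = g x) -> lip f -> lip g.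
Proof. by move=> e [L L0 H]; exists L => // x y hx hy; rewrite -!e H. Qed.

Lemma lipD {R : realType} (f g : R -> R) : lip f -> lip g -> lip (fun x => f x + g x).
Proof.
move=> [L L0 H] [M M0 K]; exists (L + M); first exact: addr_ge0.
move=> x y hx hy; rewrite (_ : _ - _ = (f y - f x) + (g y - g x)); last by ring.
apply: le_trans (ler_normD _ _) _; rewrite mulrDl lerD //; [exact: H | exact: K].
Qed.

Lemma lipB {R : realType} (f g : R -> R) : lip f -> lip g -> lip (fun x => f x - g x).
Proof.
move=> [L L0 H] [M M0 K]; exists (L + M); first exact: addr_ge0.
move=> x y hx hy; rewrite (_ : _ - _ = (f y - f x) - (g y - g x)); last by ring.
apply: le_trans (ler_normB _ _) _; rewrite mulrDl lerD //; [exact: H | exact: K].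
Qed.

Lemma lipM {R : realType} (c : R) (f : R -> R) : lip f -> lip (fun x => c * f x).
Proof.
move=> [L L0 H]; exists (`|c| * L); first by rewrite mulr_ge0.
move=> x y hx hy; rewrite -mulrBr normrM -mulrA ler_wpM2l //; exact: H.
Qed.

Lemma lipX {R : realType} k : lip (fun x : R => x ^+ k).
Proof.
exists k%:R => // x y /andP[x0 x1] /andP[y0 y1].
elim: k => [|k IH]; first by rewrite !expr0 subrr normr0 mul0r.
rewrite (_ : _ - _ = y * (y ^+ k - x ^+ k) + x ^+ k * (y - x)); last by rewrite !exprS; ring.
apply: le_trans (ler_normD _ _) _; rewrite !normrM.
have : `|y| * `|y ^+ k - x ^+ k| <= k%:R * `|y - x|.
  apply: le_trans IH; apply: ler_piMl; first exact: normr_ge0.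
  by rewrite ger0_norm.
have : `|x ^+ k| * `|y - x| <= `|y - x|.
  apply: ler_piMl; first exact: normr_ge0.
  by rewrite ger0_norm ?exprn_ge0 // exprn_ile1.
rewrite -addn1 natrD; lra.
Qed.
Lemma Pn0 {R : realType} (x : R) : Pn 0 x = 0.
Proof. by rewrite /Pn big_geq. Qed.
Lemma dPn0 {R : realType} (x : R) : dPn 0 x = 0.
Proof. by rewrite /dPn big_geq. Qed.
Lemma PnS {R : realType} m (x : R) : Pn m.+1 x = Pn m x + x ^+ m.+1.
Proof. by rewrite /Pn big_nat_recr. Qed.
Lemma dPnS {R : realType} m (x : R) : dPn m.+1 x = dPn m x + m.+1%:R * x ^+ m.
Proof. by rewrite /dPn big_nat_recr. Qed.

Definition Fm {R : realType} m (x : R) := x * dPn m x - Pn m x.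
Definition hm {R : realType} m (x : R) := dPn m x - Fm m x.
Definition Em {R : realType} m (x : R) := hm m x * (hm m x - 1) - 2 * Fm m x.

Lemma Fm0 {R : realType} (x : R) : Fm 0 x = 0.
Proof. by rewrite /Fm Pn0 dPn0; ring. Qed.
Lemma FmS {R : realType} m (x : R) : Fm m.+1 x = Fm m x + m%:R * x ^+ m.+1.
Proof. rewrite /Fm PnS dPnS exprS -addn1 natrD; ring. Qed.
Lemma hm0 {R : realType} (x : R) : hm 0 x = 0.
Proof. by rewrite /hm Fm0 dPn0; ring. Qed.
Lemma hmS {R : realType} m (x : R) :
  hm m.+1 x = hm m x + x ^+ m * (m%:R + 1 - m%:R * x).
Proof. rewrite /hm FmS dPnS exprS -addn1 natrD; ring. Qed.

Lemma hm_closed {R : realType} m (x : R) :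
  (1 - x) * hm m x = 1 + x - 2 * x ^+ m - (m%:R - 1) * x ^+ m * (1 - x).
Proof.
elim: m => [|m IH]; first by rewrite hm0 expr0; ring.
rewrite hmS mulrDr IH exprS -addn1 natrD; ring.
Qed.

Lemma hm1 {R : realType} m : hm m (1 : R) = m%:R.
Proof. elim: m => [|m IH]; first by rewrite hm0. by rewrite hmS IH expr1n -addn1 natrD; ring. Qed.
Lemma Fm1 {R : realType} m : 2 * Fm m (1 : R) = m%:R * (m%:R - 1).
Proof. elim: m => [|m IH]; first by rewrite Fm0; ring.
by rewrite FmS mulrDr IH expr1n -addn1 natrD; ring. Qed.
Lemma Em1 {R : realType} m : Em m (1 : R) = 0.
Proof. by rewrite /Em Fm1 hm1; ring. Qed.

Lemma bern {R : realType} m (x : R) : 0 <= x <= 1 -> x ^+ m * (1 + m%:R * (1 - x)) <= 1.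
Proof.
move=> /andP[x0 x1]; elim: m => [|m IH]; first by rewrite expr0; lra.
have h1 : 0 <= x ^+ m.+1 by rewrite exprn_ge0.
have h2 : x ^+ m.+1 <= 1 by rewrite exprn_ile1.
have : x ^+ m.+1 * (1 + m.+1%:R * (1 - x)) = x * (x ^+ m * (1 + m%:R * (1 - x))) + x ^+ m.+1 * (1 - x).
  by rewrite exprS -addn1 natrD; ring.
move=> ->; nra.
Qed.

Lemma Em_step {R : realType} m (x : R) :
  (1 - x) * (Em m.+1 x - Em m x) =
  x ^+ m * ((1 + m%:R * (1 - x)) + x * (3 + m%:R * (1 - x))) *
  (1 - x ^+ m * (1 + m%:R * (1 - x))).
Proof.
have e : Em m.+1 x - Em m x = (x ^+ m * (m%:R + 1 - m%:R * x)) * (2 * hm m x + x ^+ m * (m%:R + 1 - m%:R * x) - 1) - 2 * m%:R * x ^+ m.+1.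
  rewrite /Em hmS FmS; ring.
rewrite e !exprS.
have H := hm_closed m x.
set h := hm m x in H *; set u := x ^+ m in H *.
have -> : (1 - x) * (u * (m%:R + 1 - m%:R * x) * (2 * h + u * (m%:R + 1 - m%:R * x) - 1) - 2 * m%:R * (x * u))
  = u * (m%:R + 1 - m%:R * x) * (2 * ((1 - x) * h) + (1 - x) * (u * (m%:R + 1 - m%:R * x) - 1)) - 2 * m%:R * (x * u) * (1 - x) by ring.
rewrite H; ring.
Qed.

Lemma Em_mono {R : realType} m (x : R) : 0 <= x <= 1 -> Em m x <= Em m.+1 x.
Proof.
move=> hx; have [->|x1] := eqVneq x 1; first by rewrite !Em1.
have y0 : 0 < 1 - x by case/andP: (hx) => _ xl; rewrite subr_gt0 lt_neqAle x1.
have hb := bern m x hx.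
have hu : 0 <= x ^+ m by case/andP: hx => ? ?; rewrite exprn_ge0.
have hmm : 0 <= m%:R :> R by [].
have hL : 0 <= (1 + m%:R * (1 - x)) + x * (3 + m%:R * (1 - x)).
  case/andP: hx => ? ?; have hy : 0 <= m%:R * (1 - x) by apply: mulr_ge0 => //; lra.
  apply: addr_ge0; first lra. apply: mulr_ge0 => //; lra.
have := Em_step m x.
set d := Em m.+1 x - Em m x => hd.
have : 0 <= (1 - x) * d.
  rewrite hd; apply: mulr_ge0; first exact: mulr_ge0. lra.
rewrite pmulr_rge0 // /d subr_ge0 //.
Qed.

Lemma Em0 {R : realType} (x : R) : Em 0 x = 0.
Proof. by rewrite /Em hm0 Fm0; ring. Qed.

Lemma Em_ge0 {R : realType} m (x : R) : 0 <= x <= 1 -> 0 <= Em m x.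
Proof.
move=> hx; elim: m => [|m IH]; first by rewrite Em0.
exact: le_trans IH (Em_mono m x hx).
Qed.

Lemma Em_pos {R : realType} m (x : R) : (2 <= m)%N -> 0 < x < 1 -> 0 < Em m x.
Proof.
move=> m2 /andP[x0 x1].
have hx : 0 <= x <= 1 by rewrite !ltW.
have E2 : 0 < Em 2 x.
  have e1 : Em 1 x = 0.
    by rewrite /Em (hmS 0) (FmS 0) hm0 Fm0 expr0; ring.
  have := Em_step 1 x; rewrite e1 subr0 expr1.
  move=> h.
  have : 0 < (1 - x) * Em 2 x.
    rewrite h; apply: mulr_gt0; first apply: mulr_gt0 => //; nra.
  rewrite pmulr_rgt0 //; lra.
elim: m m2 => [//|m IH]; rewrite leq_eqVlt => /orP[/eqP <- //|m2].
exact: lt_le_trans (IH m2) (Em_mono m x hx).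
Qed.

Lemma dPn_mono {R : realType} m (x y : R) : 0 <= x -> x <= y -> dPn m x <= dPn m y.
Proof.
move=> x0 xy; elim: m => [|m IH]; first by rewrite !dPn0.
have y0 : 0 <= y by exact: le_trans xy.
rewrite !dPnS lerD // ler_wpM2l //; apply: lerXn2r; rewrite ?nnegrE //.
Qed.

Lemma Fm_mono {R : realType} m (x y : R) : 0 <= x -> x <= y -> Fm m x <= Fm m y.
Proof.
move=> x0 xy; elim: m => [|m IH]; first by rewrite !Fm0.
have y0 : 0 <= y by exact: le_trans xy.
rewrite !FmS lerD // ler_wpM2l //; apply: lerXn2r; rewrite ?nnegrE //.
Qed.

Lemma Fm_smono {R : realType} m (x y : R) : (2 <= m)%N -> 0 <= x -> x < y -> Fm m x < Fm m y.
Proof.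
move=> m2 x0 xy; elim: m m2 => [//|m IH]; rewrite leq_eqVlt => /orP[/eqP <-|m2].
  rewrite (FmS 1) (FmS 1) (FmS 0) (FmS 0) !Fm0 !mul0r !add0r !mul1r ltrXn2r //.
have y0 : 0 <= y by exact: ltW (le_lt_trans x0 xy).
rewrite !FmS ltr_leD // ?IH // ler_wpM2l //; apply: lerXn2r; rewrite ?nnegrE // ltW //.
Qed.

Lemma hm_ge0 {R : realType} m (x : R) : 0 <= x <= 1 -> 0 <= hm m x.
Proof.
move=> /andP[x0 x1]; elim: m => [|m IH]; first by rewrite hm0.
rewrite hmS addr_ge0 // mulr_ge0 // ?exprn_ge0 //.
have : m%:R * x <= m%:R :> R by rewrite ler_piMr.
lra.
Qed.

Lemma dPn_at0 {R : realType} m : dPn m.+1 (0 : R) = 1.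
Proof.
elim: m => [|m IH]; first by rewrite dPnS dPn0 expr0; ring.
by rewrite dPnS IH expr0n /=; ring.
Qed.

Lemma Fm_at0 {R : realType} m : Fm m (0 : R) = 0.
Proof. elim: m => [|m IH]; first by rewrite Fm0. by rewrite FmS IH expr0n /=; ring. Qed.

Lemma lip_dPn {R : realType} m : lip (@dPn R m).
Proof.
elim: m => [|m IH].
  by exists 0 => // x y _ _; rewrite !dPn0 subrr normr0 mul0r.
apply: (@lip_ext _ (fun x => dPn m x + m.+1%:R * x ^+ m)); first by move=> x; rewrite dPnS.
apply: lipD; [exact: IH | apply: lipM; exact: lipX].
Qed.

Lemma lip_Fm {R : realType} m : lip (@Fm R m).
Proof.
elim: m => [|m IH].
  by exists 0 => // x y _ _; rewrite !Fm0 subrr normr0 mul0r.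
apply: (@lip_ext _ (fun x => Fm m x + m%:R * x ^+ m.+1)); first by move=> x; rewrite FmS.
apply: lipD; [exact: IH | apply: lipM; exact: lipX].
Qed.

Definition clamp {R : realType} (a b v : R) := if v < a then a else if b < v then b else v.

Lemma clamp_in {R : realType} (a b v : R) : a <= b -> a <= clamp a b v <= b.
Proof. by rewrite /clamp; case: (ltrP v a) => h1; case: (ltrP b v) => h2 ab; apply/andP; split; lra. Qed.

Lemma clamp_id {R : realType} (a b v : R) : a <= v <= b -> clamp a b v = v.
Proof. by rewrite /clamp; case: (ltrP v a) => h1; case: (ltrP b v) => h2 /andP[h3 h4] //; lra. Qed.

Lemma clamp_lip' {R : realType} (a b v w : R) : a <= b -> v <= w ->
  0 <= clamp a b w - clamp a b v <= w - v.
Proof.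
rewrite /clamp; case: (ltrP v a) => h1; case: (ltrP b v) => h2;
  case: (ltrP w a) => h3; case: (ltrP b w) => h4 ab vw; apply/andP; split; lra.
Qed.

Lemma clamp_mono {R : realType} (a b v w : R) : a <= b -> v <= w -> clamp a b v <= clamp a b w.
Proof. by move=> ab vw; have /andP[h _] := @clamp_lip' _ a b v w ab vw; lra. Qed.

Lemma clamp_lip {R : realType} (a b v w : R) : a <= b ->
  `|clamp a b w - clamp a b v| <= `|w - v|.
Proof.
move=> ab; case: (lerP v w) => h.
  have /andP[h1 h2] := @clamp_lip' _ a b v w ab h.
  by rewrite !ger0_norm // subr_ge0.
have /andP[h1 h2] := @clamp_lip' _ a b w v ab (ltW h).
by rewrite distrC ger0_norm.
Qed.

Lemma ctn_comp_lip {R : realType} (f h : R -> R) : lip f -> ctn h ->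
  (forall s, 0 <= h s <= 1) -> ctn (fun s => f (h s)).
Proof.
move=> [L L0 H] ch hin x e e0.
have L1 : 0 < L + 1 by lra.
have e'0 : 0 < e / (L + 1) by rewrite divr_gt0.
have [d d0 K] := ch x _ e'0; exists d => // y hy.
apply: le_lt_trans (H _ _ (hin x) (hin y)) _.
have hk := K y hy.
have : L * `|h y - h x| <= L * (e / (L + 1)) by rewrite ler_wpM2l // ltW.
have : L * (e / (L + 1)) < e.
  rewrite mulrA ltr_pdivrMr //; nra.
lra.
Qed.

Lemma ctn_comp {R : realType} (f h : R -> R) : ctn f -> ctn h -> ctn (fun s => f (h s)).
Proof.
move=> cf ch x e e0; have [d1 d10 K1] := cf (h x) e e0.
have [d2 d20 K2] := ch x d1 d10; exists d2 => // y hy; exact/K1/K2.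
Qed.

Lemma ctn_const {R : realType} (c : R) : ctn (fun _ => c).
Proof. by move=> x e e0; exists 1 => // y _; rewrite subrr normr0. Qed.

Lemma ctn_lin {R : realType} (a c : R) : ctn (fun s => a - c * s).
Proof.
move=> x e e0; exists (e / (`|c| + 1)); first by rewrite divr_gt0 // ltr_wpDl.
move=> y hy; rewrite (_ : _ - _ = - c * (y - x)); last by ring.
rewrite normrM normrN.
have c1 : 0 < `|c| + 1 by rewrite ltr_wpDl.
have : `|c| * `|y - x| <= `|c| * (e / (`|c| + 1)) by rewrite ler_wpM2l // ltW.
have : `|c| * (e / (`|c| + 1)) < e by rewrite mulrA ltr_pdivrMr //; nra.
lra.
Qed.

Lemma ctnD {R : realType} (f h : R -> R) : ctn f -> ctn h -> ctn (fun s => f s + h s).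
Proof.
move=> cf ch x e e0.
have e2 : 0 < e / 2 by rewrite divr_gt0.
have [d1 d10 K1] := cf x _ e2; have [d2 d20 K2] := ch x _ e2.
exists (if d1 < d2 then d1 else d2); first by case: ifP.
move=> y hy.
have hy1 : `|y - x| < d1 by move: hy; case: ifP => // /negbT; rewrite -leNgt => ?; lra.
have hy2 : `|y - x| < d2 by move: hy; case: ifP => // ?; lra.
rewrite (_ : _ - _ = (f y - f x) + (h y - h x)); last by ring.
apply: le_lt_trans (ler_normD _ _) _.
have := K1 y hy1; have := K2 y hy2; lra.
Qed.

Lemma ctn_cl01 {R : realType} : ctn (clamp (0 : R) 1).
Proof.
move=> x e e0; exists e => // y hy; apply: le_lt_trans hy.
exact: clamp_lip.
Qed.

Lemma Fm_ge0 {R : realType} m (x : R) : 0 <= x -> 0 <= Fm m x.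
Proof. by move=> x0; rewrite -(Fm_at0 m); exact: Fm_mono. Qed.

Lemma gex {R : realType} m (v : R) : exists x, (0 <= x <= 1) /\ Fm m x = clamp 0 (Fm m 1) v.
Proof.
have F10 : 0 <= Fm m (1 : R) by exact: Fm_ge0.
have cf : ctn (fun x : R => Fm m (clamp 0 1 x)).
  apply: ctn_comp_lip; [exact: lip_Fm | exact: ctn_cl01 | by move=> s; apply: clamp_in].
have [|x xi fx] := @my_ivt R _ 0 1 (clamp 0 (Fm m 1) v) cf (@ler01 R).
  rewrite (@clamp_id R 0 1 0) ?lexx ?ler01 // (@clamp_id R 0 1 1) ?lexx ?ler01 // Fm_at0; exact: clamp_in.
exists x; split => //; by rewrite -fx clamp_id.
Qed.

Definition g {R : realType} m (v : R) : R := sval (cid (gex m v)).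

Lemma g_in {R : realType} m (v : R) : 0 <= g m v <= 1.
Proof. by rewrite /g; case: cid => x [] /=. Qed.

Lemma g_F {R : realType} m (v : R) : Fm m (g m v) = clamp 0 (Fm m 1) v.
Proof. by rewrite /g; case: cid => x [] /=. Qed.

Arguments Fm_smono {R} m {x y}.
Arguments Fm_mono {R} m {x y}.
Arguments dPn_mono {R} m {x y}.
Arguments Fm_ge0 {R} m {x}.

Lemma Fm_inj {R : realType} m (x y : R) : (2 <= m)%N -> 0 <= x -> 0 <= y ->
  Fm m x = Fm m y -> x = y.
Proof.
move=> m2 x0 y0 e; case: (ltrgtP x y) => // h.
- by have := Fm_smono m m2 x0 h; rewrite e ltxx.
- by have := Fm_smono m m2 y0 h; rewrite e ltxx.
Qed.

Lemma g_mono {R : realType} m (v w : R) : (2 <= m)%N -> v <= w -> g m v <= g m w.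
Proof.
move=> m2 vw; case: (lerP (g m v) (g m w)) => // h.
have := Fm_smono m m2 (proj1 (andP (g_in m w))) h; rewrite !g_F.
have := @clamp_mono R 0 (Fm m 1) v w (Fm_ge0 m (@ler01 R)) vw; lra.
Qed.

Lemma gK {R : realType} m (x : R) : (2 <= m)%N -> 0 <= x <= 1 -> g m (Fm m x) = x.
Proof.
move=> m2 /andP[x0 x1]; apply: (@Fm_inj R m _ _ m2) => //; first by case/andP: (g_in m (Fm m x)).
rewrite g_F clamp_id // Fm_ge0 //=; exact: Fm_mono.
Qed.

Lemma ctn_g {R : realType} m : (2 <= m)%N -> ctn (@g R m).
Proof.
move=> m2 v e e0.
set x := g m v; have /andP[x0 x1] : 0 <= x <= 1 by exact: g_in.
have F1 : 0 <= Fm m (1 : R) by exact: Fm_ge0.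
set d1 := if x < 1 then Fm m (clamp 0 1 (x + e)) - Fm m x else 1.
set d2 := if 0 < x then Fm m x - Fm m (clamp 0 1 (x - e)) else 1.
have d1p : 0 < d1.
  rewrite /d1; case: ifP => // xl; rewrite subr_gt0; apply: Fm_smono => //.
  rewrite /clamp; case: (ltrP (x + e) 0) => h1; case: (ltrP 1 (x + e)) => h2; lra.
have d2p : 0 < d2.
  rewrite /d2; case: ifP => // xl; rewrite subr_gt0; apply: Fm_smono => //.
    by case/andP: (@clamp_in R 0 1 (x - e) ler01).
  rewrite /clamp; case: (ltrP (x - e) 0) => h1; case: (ltrP 1 (x - e)) => h2; lra.
exists (if d1 < d2 then d1 else d2); first by case: ifP.
move=> w hw.
have hw1 : `|w - v| < d1 by move: hw; case: ifP => // /negbT; rewrite -leNgt => ?; lra.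
have hw2 : `|w - v| < d2 by move: hw; case: ifP => // ?; lra.
have hc := @clamp_lip R 0 (Fm m 1) v w F1.
rewrite -!g_F in hc; rewrite -/x in hc.
set z := g m w in hc *; have /andP[z0 z1] : 0 <= z <= 1 by exact: g_in.
have hcl := le_lt_trans hc hw1; have hc2 := le_lt_trans hc hw2.
move: hcl hc2; rewrite !ltr_norml => /andP[a1 a2] /andP[b1 b2].
apply/andP; split.
- case: (lerP z (x - e)) => hh; last lra; exfalso.
  have xp : 0 < x by lra.
  have ce : clamp 0 1 (x - e) = x - e by apply: clamp_id; lra.
  move: b1; rewrite /d2 xp ce.
  have := Fm_mono m z0 hh; lra.
- case: (lerP (x + e) z) => hh; last lra; exfalso.
  have xp : x < 1 by lra.
  have ce : clamp 0 1 (x + e) = x + e by apply: clamp_id; lra.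
  move: a2; rewrite /d1 xp ce.
  have := Fm_mono m (_ : 0 <= x + e) hh; lra.
Qed.

Lemma ctn_ext {R : realType} (f h : R -> R) : (forall x, f x = h x) -> ctn f -> ctn h.
Proof. by move=> e cf x eps ep; have [d d0 K] := cf x eps ep; exists d => // y hy; rewrite -!e K. Qed.

Fixpoint X {R : realType} m (s : R) k : R :=
  match k with
  | 0 => 0
  | 1 => 0
  | k'.+1 => g m (dPn m (X m s k') - k'%:R * s)
  end.

Lemma XS {R : realType} m (s : R) k : (1 <= k)%N -> X m s k.+1 = g m (dPn m (X m s k) - k%:R * s).
Proof. by case: k. Qed.

Lemma X1 {R : realType} m (s : R) : X m s 1 = 0.
Proof. by []. Qed.

Lemma X_in {R : realType} m (s : R) k : 0 <= X m s k <= 1.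
Proof. case: k => [|[|k]] /=; rewrite ?lexx ?ler01 //; exact: g_in. Qed.

Lemma ctn_X {R : realType} m k : (2 <= m)%N -> ctn (fun s : R => X m s k).
Proof.
move=> m2; elim: k => [|k IH]; first exact: ctn_const.
case: k IH => [|k] IH; first exact: ctn_const.
apply: (@ctn_ext _ (fun s => g m (dPn m (X m s k.+1) + (0 - k.+1%:R * s)))).
  by move=> s; rewrite [RHS]XS //; congr (g m _); ring.
apply: ctn_comp; first exact: ctn_g.
apply: ctnD; last exact: ctn_lin.
apply: ctn_comp_lip => //; [exact: lip_dPn | by move=> s; exact: X_in].
Qed.

Lemma X_at1 {R : realType} m k : (2 <= m)%N -> X m (1 : R) k = 0.
Proof.
case: m => [//|m'] m2; elim: k => [|k IH] //; case: k IH => [|k] IH //.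
rewrite XS // IH dPn_at0.
apply: (@Fm_inj R m'.+1 _ _ m2); first by case/andP: (g_in m'.+1 (1 - k.+1%:R * (1:R))).
  by [].
rewrite g_F Fm_at0 /clamp; case: ifP => // /negbT; rewrite -leNgt => h.
have : (1 : R) <= k.+1%:R by rewrite ler1n.
have := Fm_ge0 m'.+1 (@ler01 R); case: ifP => hh; lra.
Qed.

Lemma hgt {R : realType} (t J : R) : 0 <= t -> 1 <= J -> J * (J - 1) < t * (t - 1) -> J < t.
Proof. move=> t0 J1 h; case: (ltrP J t) => // tJ; nra. Qed.

Lemma clampF {R : realType} m (v : R) : 0 <= v -> clamp 0 (Fm m 1) v = v \/ (clamp 0 (Fm m 1) v = Fm m 1 /\ Fm m 1 < v).
Proof. move=> v0; rewrite /clamp; case: ifP => h1; first lra. case: ifP => h2; [right | left]; lra. Qed.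

Lemma inv_at0 {R : realType} m j : (3 <= m)%N -> (2 <= j)%N -> (j < m)%N ->
  j%:R * (j%:R + 1) < 2 * dPn m (X m (0 : R) j).
Proof.
move=> m3 j2 jm.
have m2 : (2 <= m)%N by exact: ltnW.
have F1e := @Fm1 R m.
have mR : (3 : R) <= m%:R by rewrite (ler_nat R 3 m).
elim: j j2 jm => [//|j IH]; rewrite leq_eqVlt => /orP[/eqP [] <-|j2] jm.
  rewrite XS // X1 mulr0 subr0.
  case: m m3 m2 F1e mR {jm IH} => [//|m'] m3 m2 F1e mR.
  rewrite dPn_at0.
  set x := g m'.+1 (1 : R).
  have Fx : Fm m'.+1 x = 1.
    rewrite /x g_F clamp_id //; apply/andP; split; first by [].
    nra.
  have /andP[x0 x1] : 0 <= x <= 1 by exact: g_in.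
  have xp : 0 < x.
    rewrite lt_neqAle x0 andbT; apply/eqP => ex; move: Fx; rewrite -ex Fm_at0.
    by move/eqP; rewrite eq_sym oner_eq0.
  have xl : x < 1.
    rewrite lt_neqAle x1 andbT; apply/eqP => ex; move: Fx; rewrite ex => Fx.
    rewrite Fx in F1e; nra.
  have E : 0 < Em m'.+1 x by apply: Em_pos => //; rewrite xp xl.
  have h0 : 0 <= hm m'.+1 x by apply: hm_ge0; rewrite x0 x1.
  move: E; rewrite /Em Fx => E.
  have H : 2 < hm m'.+1 x by apply: hgt => //; lra.
  have : dPn m'.+1 x = hm m'.+1 x + Fm m'.+1 x by rewrite /hm; ring.
  rewrite Fx; lra.
have jm' : (j < m)%N by exact: ltnW.
have {}IH := IH j2 jm'.
rewrite XS; last exact: ltnW.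
rewrite mulr0 subr0.
set v := dPn m (X m 0 j) in IH *.
set x := g m v.
have /andP[x0 x1] : 0 <= x <= 1 by exact: g_in.
have jR : (2 : R) <= j%:R by rewrite (ler_nat R 2 j).
have jmR : j%:R + 2 <= m%:R :> R by rewrite -(natrD R j 2) ler_nat addn2.
have v0 : 0 <= v by nra.
have Fx : j%:R * (j%:R + 1) < 2 * Fm m x.
  rewrite /x g_F; case: (clampF m v v0) => [->|[-> _]]; first by [].
  rewrite F1e; nra.
have E : 0 <= Em m x by apply: Em_ge0; rewrite x0 x1.
have h0 : 0 <= hm m x by apply: hm_ge0; rewrite x0 x1.
move: E; rewrite /Em => E.
have H : j%:R + 1 < hm m x.
  apply: hgt => //; first lra.
  lra.
have : dPn m x = hm m x + Fm m x by rewrite /hm; ring.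
rewrite -addn1 natrD; lra.
Qed.

Lemma cmp_seq {R : realType} n (a b : nat -> R) (s1 s2 : R) :
  (forall j, (1 <= j <= n)%N -> 0 <= a j <= 1) ->
  (forall j, (1 <= j <= n)%N -> 0 <= b j <= 1) ->
  a 1%N = 0 -> b 1%N = 0 ->
  (forall j, (1 <= j < n)%N -> Fm n (a j.+1) = dPn n (a j) - j%:R * s1) ->
  (forall j, (1 <= j < n)%N -> Fm n (b j.+1) = dPn n (b j) - j%:R * s2) ->
  s1 < s2 -> forall j, (1 <= j <= n)%N -> b j <= a j /\ ((2 <= j)%N -> b j < a j).
Proof.
move=> ha hb a1 b1 ea eb s12; elim => [//|j IH] /andP[j1 jn].
case: j IH j1 jn => [|j] IH j1 jn; first by rewrite a1 b1 lexx.
have jn' : (1 <= j.+1 <= n)%N by rewrite /= ltnW.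
have [IH1 _] := IH jn'.
have /andP[a0 _] := ha _ jn'; have /andP[b0 _] := hb _ jn'.
have jn2 : (1 <= j.+2 <= n)%N by [].
have /andP[a0' a1'] := ha _ jn2; have /andP[b0' b1'] := hb _ jn2.
have hlt : b j.+2 < a j.+2.
  case: (ltrP (b j.+2) (a j.+2)) => // h; exfalso.
  have := Fm_mono n a0' h; rewrite ea // eb //.
  have := dPn_mono n b0 IH1.
  have : (1 : R) <= j.+1%:R by rewrite ler1n.
  nra.
by split => //; exact: ltW.
Qed.

Lemma eqconv {R : realType} n (x0 x1 c : R) :
  Fm n x1 = dPn n x0 - c -> dPn n x1 - dPn n x0 = (1 - x1) * dPn n x1 + Pn n x1 - c.
Proof. rewrite /Fm => h; lra. Qed.

Lemma eqconv' {R : realType} n (x0 x1 c : R) :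
  dPn n x1 - dPn n x0 = (1 - x1) * dPn n x1 + Pn n x1 - c -> Fm n x1 = dPn n x0 - c.
Proof. rewrite /Fm => h; lra. Qed.

Theorem mainTheorem7 (R : realType) (n : nat) (hn : (2 < n)%N) :
  exists! zeta : R, 1 < zeta /\
    exists eps : nat -> R,
      [/\ eps n = 0, eps 1%N = 1,
          (forall j : nat, (1 <= j < n)%N -> eps j.+1 < eps j) &
          (forall j : nat, (1 <= j <= n.-1)%N ->
             dPn n (1 - eps j.+1) - dPn n (1 - eps j)
             = eps j.+1 * dPn n (1 - eps j.+1) + Pn n (1 - eps j.+1)
               - j%:R / zeta)].
Proof.
have n2 : (2 <= n)%N by exact: ltnW.
have F1e := @Fm1 R n.
have F10 : 0 <= Fm n (1 : R) by exact: Fm_ge0.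
have nR : (3 : R) <= n%:R by rewrite (ler_nat R 3 n).
case: n hn n2 F1e F10 nR => [//|n'] hn n2 F1e F10 nR.
have n'1 : (1 <= n')%N by case: n' hn {n2 F1e F10 nR}.
rewrite -addn1 natrD in F1e nR.
set phi := fun s : R => dPn n'.+1 (X n'.+1 s n') - n'%:R * s.
have cphi : ctn (fun s => - phi s).
  apply: (@ctn_ext _ (fun s => (-1) * dPn n'.+1 (X n'.+1 s n') + (0 - (- n'%:R) * s))).
    by move=> s; rewrite /phi; ring.
  apply: ctnD; last exact: ctn_lin.
  apply: (@ctn_comp_lip _ (fun x => -1 * dPn n'.+1 x) (fun s => X n'.+1 s n')); [apply: lipM; exact: lip_dPn | exact: ctn_X | by move=> s; exact: X_in].
have phi1 : phi 1 < Fm n'.+1 1.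
  rewrite /phi X_at1 // dPn_at0; lra.
have phi0 : Fm n'.+1 1 < phi 0.
  have := @inv_at0 R n'.+1 n' hn hn (ltnSn n').
  rewrite /phi mulr0 subr0; lra.
have [|s /andP[s0 s1] phis] := @my_ivt R (fun s => - phi s) 0 1 (- Fm n'.+1 1) cphi (@ler01 R).
  apply/andP; split; lra.
have {}phis : phi s = Fm n'.+1 1 by lra.
have sp : 0 < s by rewrite lt_neqAle s0 andbT; apply/eqP => e; rewrite -e in phis; lra.
have sl : s < 1 by rewrite lt_neqAle s1 andbT; apply/eqP => e; rewrite e in phis; lra.
set m := n'.+1.
have xsn : X m s m = 1.
  rewrite /m XS // (_ : dPn _ _ - _ = phi s) // phis.
  by rewrite gK // lexx ler01.
have hprop : forall k, (1 <= k)%N -> X m s k.+1 <= X m s k -> X m s k.+2 <= X m s k.+1.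
  move=> k k1 h.
  have le : dPn m (X m s k.+1) - k.+1%:R * s <= dPn m (X m s k) - k%:R * s.
    have := dPn_mono m (proj1 (andP (X_in m s k.+1))) h.
    rewrite -addn1 natrD; lra.
  have := @g_mono R m _ _ n2 le; rewrite -!XS //; exact: ltnW.
have hfail : forall k i, (1 <= k)%N -> X m s k.+1 <= X m s k -> X m s (k + i).+1 <= X m s (k + i).
  move=> k i k1 h; elim: i => [|i IH]; first by rewrite addn0.
  rewrite addnS; apply: hprop => //; by rewrite (leq_trans k1) ?leq_addr.
have inc : forall k, (1 <= k <= n')%N -> X m s k < X m s k.+1.
  move=> k /andP[k1 kn]; case: (ltrP (X m s k) (X m s k.+1)) => // h; exfalso.
  have := hfail k (n' - k)%N k1 h; rewrite subnKC // xsn => H.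
  have xn1 : X m s n' = 1 by have /andP[_ ?] := X_in m s n'; lra.
  move: phis; rewrite /phi xn1 => phis.
  have hh := @hm1 R m; rewrite /hm /m mulrS in hh.
  have : n'%:R * s <= n'%:R * 1 :> R by rewrite ler_wpM2l.
  lra.
have eqn : forall j, (1 <= j <= n')%N -> Fm m (X m s j.+1) = dPn m (X m s j) - j%:R * s.
  move=> j /andP[j1 jn].
  have Fx : Fm m (X m s j.+1) = clamp 0 (Fm m 1) (dPn m (X m s j) - j%:R * s) by rewrite XS // g_F.
  case: (eqVneq j n') => [ej|jn'].
    rewrite Fx ej (_ : dPn _ _ - _ = phi s) // phis clamp_id //; apply/andP; split => //.
  have jn2 : (j < n')%N by rewrite ltn_neqAle jn' jn.
  have inc1 := inc j (introT andP (conj j1 jn)).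
  have inc2 := inc j.+1 jn2.
  have /andP[xj0 _] := X_in m s j; have /andP[_ xj2] := X_in m s j.+2.
  have /andP[xj10 xj11] := X_in m s j.+1.
  move: Fx; rewrite /clamp; case: ifP => h1 Fx.
    exfalso; have : X m s j.+1 = 0 by apply: (@Fm_inj R m _ _ n2) => //; rewrite Fx Fm_at0.
    lra.
  case: ifP => h2 in Fx *; last by [].
  exfalso; have : X m s j.+1 = 1 by apply: (@Fm_inj R m _ _ n2) => //.
  lra.
have sK : forall y : R, 1 - (1 - y) = y by move=> y; ring.
exists s^-1; split.
  split; first by rewrite invf_gt1.
  exists (fun j => 1 - X m s j); split.
  - by rewrite xsn subrr.
  - by rewrite X1 subr0.
  - move=> j /andP[j1 jn]; rewrite ltrD2l ltrN2; apply: inc; by rewrite j1.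
  - move=> j jn; rewrite !sK invrK; apply: eqconv; exact: eqn.
move=> z [z1 [e [en e1 edec eeq]]].
have zp : 0 < z by exact: lt_trans ltr01 z1.
set t := z^-1.
have tp : 0 < t by rewrite invr_gt0.
have tl : t < 1 by rewrite invf_lt1.
have emono : forall j i, (1 <= j)%N -> (j + i <= m)%N -> e (j + i)%N <= e j.
  move=> j i j1; elim: i => [|i IH] hi; first by rewrite addn0.
  rewrite addnS in hi *; apply: le_trans (IH (ltnW hi)).
  apply: ltW; apply: edec; rewrite hi andbT; exact: (leq_trans j1 (leq_addr _ _)).
have ein : forall j, (1 <= j <= m)%N -> 0 <= 1 - e j <= 1.
  move=> j /andP[j1 jm].
  have := emono 1%N j.-1 isT; rewrite add1n prednK // => /(_ jm); rewrite e1 => h1.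
  have := emono j (m - j)%N j1; rewrite subnKC // => /(_ (leqnn _)); rewrite en => h2.
  apply/andP; split; lra.
have eqe : forall j, (1 <= j < m)%N -> Fm m (1 - e j.+1) = dPn m (1 - e j) - j%:R * t.
  move=> j hj; apply: eqconv'; rewrite -[in LHS](sK (e j.+1)).
  by rewrite -[1 - (1 - e j.+1)]/(1 - (1 - e j.+1)) sK eeq.
have eqx : forall j, (1 <= j < m)%N -> Fm m (X m s j.+1) = dPn m (X m s j) - j%:R * s.
  by move=> j /andP[j1 jm]; apply: eqn; rewrite j1.
have xin : forall j, (1 <= j <= m)%N -> 0 <= X m s j <= 1 by move=> j _; exact: X_in.
have e1' : 1 - e 1%N = 0 by rewrite e1 subrr.
case: (ltrgtP s t) => st.
- have [_ /(_ n2)] := @cmp_seq R m (X m s) (fun j => 1 - e j) s t xin ein (X1 _ _) e1' eqx eqe st m (introT andP (conj isT (leqnn m))).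
  by rewrite xsn en subr0 ltxx.
- have [_ /(_ n2)] := @cmp_seq R m (fun j => 1 - e j) (X m s) t s ein xin e1' (X1 _ _) eqe eqx st m (introT andP (conj isT (leqnn m))).
  by rewrite xsn en subr0 ltxx.
- by rewrite st /t invrK.
Qed.
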